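(* Let $G$ be a connected graph with minimum degree $\delta(G)\ge 3$, and let $D\subseteq V(G)$ be a connected $3$-dominating set of $G$. Then $px_3(G)\le px_3(G[D])+1$. Moreover, this bound is tight (there are such graphs $G$ and sets $D$ with equality).
   Context: All graphs are finite, simple and undirected. For $D\subseteq V(G)$, $G[D]$ is the induced subgraph. A set $D$ is a $3$-dominating set of $G$ if every vertex of $V(G)\setminus D$ is adjacent to at least $3$ distinct vertices of $D$; it is connected if $G[D]$ is connected. An edge-coloring assigns colors to edges, adjacent edges being allowed to share a color. A tree in an edge-colored graph is proper if no two adjacent edges of it receive the same color. An edge-coloring of a connected graph $H$ is a $3$-proper coloring if for every $3$-element set $S\subseteq V(H)$ there is a proper tree in $H$ containing all vertices of $S$; $px_3(H)$ is the minimum number of colors in a $3$-proper coloring of $H$. *)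

(* Defs.v *)
From Stdlib Require Import ClassicalEpsilon.
From mathcomp Require Import all_boot.
Set Implicit Arguments. Unset Strict Implicit. Unset Printing Implicit Defensive.

Section Defs.
Variable T : finType.

Definition simple_graph (e : rel T) : Prop := symmetric e /\ irreflexive e.

(* edge relation of the graph with vertex set V induced by r: H = (V, induced V r) *)
Definition induced (V : {set T}) (r : rel T) : rel T :=
  fun x y => [&& x \in V, y \in V & r x y].

Definition connectedb (V : {set T}) (r : rel T) : bool :=
  [forall x in V, forall y in V, connect (induced V r) x y].

Definition min_degree_ge (e : rel T) (d : nat) : Prop :=
  forall x : T, d <= #|[set y | e x y]|.

Definition three_dominating (e : rel T) (D : {set T}) : Prop :=
  forall x : T, x \notin D -> 3 <= #|[set y in D | e x y]|.

(* (W, F) is a tree in the graph (V, induced V r), F given as a symmetric set of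
   ordered pairs (each edge {x,y} stored as (x,y) and (y,x)); a tree is a
   connected graph with |W|-1 edges. *)
Definition is_tree_in (V : {set T}) (r : rel T) (W : {set T}) (F : {set T * T}) : bool :=
  [&& [forall p in F, induced V r p.1 p.2],
      [forall p in F, (p.2, p.1) \in F],
      [forall p in F, p.1 \in W],
      W != set0,
      [forall x in W, forall y in W, connect (fun a b => (a, b) \in F) x y]
    & #|F| == (#|W|).-1.*2].

Definition proper_edges k (c : {ffun T * T -> 'I_k}) (F : {set T * T}) : bool :=
  [forall x, forall y, forall z,
     [&& (x, y) \in F, (x, z) \in F & y != z] ==> (c (x, y) != c (x, z))].

Definition three_proper (V : {set T}) (r : rel T) k (c : {ffun T * T -> 'I_k}) : bool :=
  [forall x, forall y, c (x, y) == c (y, x)] &&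
  [forall S : {set T}, (S \subset V) && (#|S| == 3) ==>
     [exists W : {set T}, exists F : {set T * T},
        [&& is_tree_in V r W F, S \subset W & proper_edges c F]]].

Definition has_3proper (V : {set T}) (r : rel T) (k : nat) : bool :=
  [exists c : {ffun T * T -> 'I_k}, three_proper V r c].

(* px_3 of the graph (V, induced V r): the least number of colours of a
   3-proper colouring (0 by convention if none exists, which never happens
   for the connected graphs considered). *)
Definition px3 (V : {set T}) (r : rel T) : nat :=
  match excluded_middle_informative (exists k, has_3proper V r k) with
  | left h => ex_minn h
  | right _ => 0
  end.

End Defs.

(* Main.v *)
Require Import Defs.
From Stdlib Require Import ClassicalEpsilon.
From mathcomp Require Import all_boot zify.
Set Implicit Arguments. Unset Strict Implicit. Unset Printing Implicit Defensive.

Lemma treeP (T : finType) (V : {set T}) (r : rel T) (W : {set T}) (F : {set (T * T)}) :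
  reflect [/\ (forall p, p \in F -> induced V r p.1 p.2),
              (forall p, p \in F -> (p.2, p.1) \in F),
              (forall p, p \in F -> p.1 \in W),
              W != set0
            & (forall x y, x \in W -> y \in W -> connect (fun a b => (a, b) \in F) x y)
              /\ #|F| = (#|W|).-1.*2]
          (is_tree_in V r W F).
Proof.
apply: (iffP idP).
- case/and5P => /forall_inP h1 /forall_inP h2 /forall_inP h3 h4 /andP[/forall_inP h5 /eqP h6].
  split=> //; split=> // x y xW yW; exact: (forall_inP (h5 x xW)).
- case=> h1 h2 h3 h4 [h5 h6]; apply/and5P; split => //; try (apply/forall_inP; assumption).
  apply/andP; split; last by apply/eqP.
  by apply/forall_inP => x xW; apply/forall_inP => y yW; apply: h5.
Qed.

Lemma connect_out (T : finType) (R : rel T) (W : {set T}) x y :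
  connect R x y -> x \in W -> y \notin W -> exists a b, [/\ a \in W, b \notin W & R a b].
Proof.
move=> /connectP[p]; elim: p x => [|z p IH] x /=.
  by move=> _ -> xW /negP.
case/andP=> Rxz pz ly xW yW.
case: (boolP (z \in W)) => zW.
  exact: IH pz ly zW yW.
by exists x, z.
Qed.

Lemma connect_nb (T : finType) (R : rel T) x y :
  connect R x y -> x != y -> exists z, R x z.
Proof.
move=> cxy xy; have := connect_out cxy (set11 x).
rewrite inE eq_sym xy => /(_ isT) [a [b [/set1P -> _ ?]]]; by exists b.
Qed.

Lemma connect_mono (T : finType) (F F' : {set T * T}) x y : F \subset F' ->
  connect (fun a b => (a, b) \in F) x y -> connect (fun a b => (a, b) \in F') x y.
Proof. by move=> sub; apply: connect_sub => u v uv; apply: connect1; exact: (subsetP sub _ uv). Qed.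

Lemma cardsU_disj (T : finType) (A B : {set T}) :
  (forall x, x \in A -> x \notin B) -> #|A :|: B| = #|A| + #|B|.
Proof.
move=> H; rewrite cardsU; have -> : A :&: B = set0.
  by apply/setP=> x; rewrite !inE; case: (boolP (x \in A)) => // /H /negbTE ->.
by rewrite cards0 subn0.
Qed.

Lemma tree_sub (T : finType) (V : {set T}) (r : rel T) W F :
  is_tree_in V r W F -> 1 < #|W| -> W \subset V.
Proof.
case/treeP => h1 h2 h3 h4 [h5 h6] W2; apply/subsetP => w wW.
have : W :\ w != set0 by rewrite -card_gt0; move: W2; rewrite (cardsD1 w W) wW; lia.
case/set0Pn => w2 /setD1P[w2w w2W].
have := connect_nb (h5 _ _ wW w2W); rewrite eq_sym w2w => /(_ isT) [z wz].
by have /and3P[] := h1 _ wz.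
Qed.


Lemma spanning (T : finType) (V : {set T}) (r : rel T) :
  symmetric r -> connectedb V r -> V != set0 -> exists F, is_tree_in V r V F.
Proof.
move=> rs /forall_inP conn /set0Pn[v vV].
suff: forall n W F, #|V :\: W| = n -> W \subset V -> is_tree_in V r W F ->
        exists F, is_tree_in V r V F.
  move=> /(_ _ [set v] set0 erefl); apply; first by rewrite sub1set.
  apply/treeP; split; try by move=> p; rewrite !inE.
  - by apply/set0Pn; exists v; rewrite set11.
  split; last by rewrite cards0 cards1.
  by move=> x y /set1P -> /set1P ->; apply: connect0.
elim=> [|n IH] W F hn WV trWF.
  have WV' : W = V.
    by apply/eqP; rewrite eqEsubset WV /= -setD_eq0 -cards_eq0 hn.
  by move: trWF; rewrite WV' => ?; exists F.
case/treeP: trWF => h1 h2 h3 h4 [h5 h6].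
have : V :\: W != set0 by rewrite -card_gt0 hn.
case/set0Pn=> y /setDP[yV yW].
have /set0Pn[w wW] := h4.
have := connect_out (forall_inP (conn w (subsetP WV w wW)) y yV) wW yW.
case=> a [b [aW bW /and3P[aV bV rab]]].
have ab : a != b by apply/eqP => ab; rewrite -ab aW in bW.
apply: (IH (b |: W) ((a,b) |: ((b,a) |: F))).
- have -> : V :\: (b |: W) = (V :\: W) :\ b.
    by apply/setP => z; rewrite !inE; case: (z == b); rewrite ?andbF.
  have := cardsD1 b (V :\: W); rewrite inE bW bV hn /=; lia.
- by rewrite subUset sub1set bV WV.
have abF : (a, b) \notin F by apply/negP => /h2 /h3; rewrite (negbTE bW).
have baF : (b, a) \notin F by apply/negP => /h3; rewrite (negbTE bW).
have Fsub : F \subset (a, b) |: ((b, a) |: F).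
  by apply/subsetP => p pF; rewrite !inE pF !orbT.
have hub : forall x, x \in b |: W ->
   connect (fun u z => (u, z) \in (a, b) |: ((b, a) |: F)) x a /\
   connect (fun u z => (u, z) \in (a, b) |: ((b, a) |: F)) a x.
  move=> x /setU1P[->|xW].
    by split; apply: connect1; rewrite !inE eqxx ?orbT.
  by split; apply: connect_mono Fsub _; apply: h5.
apply/treeP; split.
- move=> [p1 p2]; rewrite !inE => /or3P[/eqP[-> ->]|/eqP[-> ->]|pF].
  + by rewrite /induced aV bV.
  + by rewrite /induced aV bV rs.
  + exact: h1.
- move=> [p1 p2]; rewrite !inE => /or3P[/eqP[-> ->]|/eqP[-> ->]|pF].
  + by rewrite eqxx orbT.
  + by rewrite eqxx.
  + by rewrite h2 ?orbT.
- move=> [p1 p2]; rewrite !inE => /or3P[/eqP[-> ->]|/eqP[-> ->]|pF].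
  + by rewrite aW orbT.
  + by rewrite eqxx.
  + by rewrite h3 ?orbT.
- by apply/set0Pn; exists b; rewrite setU11.
split.
  move=> x z xW zW; apply: connect_trans (proj1 (hub x xW)) (proj2 (hub z zW)).
have nab : (a, b) \notin (b, a) |: F.
  rewrite !inE negb_or abF andbT; apply/eqP => -[abe]; by rewrite abe eqxx in ab.
rewrite (cardsU1 (a, b)) nab (cardsU1 (b, a)) baF (cardsU1 b) bW h6.
have := card_gt0 W; rewrite h4; move: #|W| => m; clear; move=> ?; lia.
Qed.


Lemma exists_coloring (T : finType) (e : rel T) (D : {set T}) :
  simple_graph e -> connectedb D e -> exists k, has_3proper D e k.
Proof.
move=> [es ei] cD.
exists #|{set T}|; apply/existsP.
exists [ffun p : T * T => enum_rank [set p.1; p.2]].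
apply/andP; split.
  by apply/forallP => x; apply/forallP => y; rewrite !ffunE /= setUC.
apply/forallP => S; apply/implyP => /andP[SD /eqP S3].
have Dn : D != set0.
  apply/set0Pn; have : 0 < #|S| by rewrite S3.
  by rewrite card_gt0 => /set0Pn[x xS]; exists x; exact: (subsetP SD).
have [F trF] := spanning es cD Dn.
apply/existsP; exists D; apply/existsP; exists F; rewrite trF SD /=.
case/treeP: trF => h1 _ _ _ _.
apply/forallP => x; apply/forallP => y; apply/forallP => z.
apply/implyP => /and3P[xy xz yz]; rewrite !ffunE /=.
apply/negP => /eqP /enum_rank_inj eqs.
have : y \in [set x; z] by rewrite -eqs set22.
case/set2P => [yx|]; last by apply/eqP.
have := h1 _ xy; rewrite /= yx => /and3P[_ _]; by rewrite ei.
Qed.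

Lemma sdr (T : finType) (e : rel T) (D S : {set T}) :
  three_dominating e D -> #|S| <= 3 ->
  exists f : T -> T, [/\ forall x, x \in S -> f x \in D,
     forall x, x \in S -> x \notin D -> e x (f x),
     forall x, x \in S -> x \in D -> f x = x & {in S &, injective f}].
Proof.
move=> td S3.
suff: forall n (A : {set T}), #|A| = n -> A \subset S :\: D ->
   exists g : T -> T, [/\ forall x, x \in A -> g x \in D,
     forall x, x \in A -> e x (g x), forall x, x \in A -> g x \notin S & {in A &, injective g}].
  move=> /(_ _ (S :\: D) erefl (subxx _)) [g [g1 g2 g3 g4]].
  exists (fun x => if x \in D then x else g x); split.
  - by move=> x xS; case: ifP => // /negbT xD; apply: g1; rewrite inE xD.
  - by move=> x xS xD; rewrite (negbTE xD); apply: g2; rewrite inE xD.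
  - by move=> x _ ->.
  move=> x y xS yS; case: ifP => xD; case: ifP => yD //.
  + by move=> xe; have := g3 y; rewrite inE yD yS -xe xS => /(_ isT).
  + by move=> ye; have := g3 x; rewrite inE xD xS ye yS => /(_ isT).
  + by apply: g4; rewrite inE ?xD ?yD.
elim=> [|n IH] A hA AS.
  by exists id; split => x; rewrite (cards0_eq hA) inE.
have : 0 < #|A| by rewrite hA.
rewrite card_gt0 => /set0Pn [a aA].
have hA0 : #|A :\ a| = n by have := cardsD1 a A; rewrite aA hA; lia.
have [g0 [g1 g2 g3 g4]] := IH (A :\ a) hA0 (subset_trans (subD1set A a) AS).
have aSD := subsetP AS a aA; move: (aSD); rewrite inE => /andP[aD aS].
have N3 := td a aD.
pose Fb := (S :&: D) :|: g0 @: (A :\ a).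
have Fb2 : #|Fb| <= 2.
  have c1 := (leq_card_setU (S :&: D) (g0 @: (A :\ a))).1.
  have c2 := leq_imset_card g0 (A :\ a).
  have c3 := cardsID D S.
  have c4 : #|A| <= #|S :\: D| by apply: subset_leq_card.
  move: c1 c2 c3 c4 S3; rewrite -/Fb hA hA0.
  move: #|Fb| #|S :&: D| #|g0 @: (A :\ a)| #|S :\: D| #|S| => ? ? ? ? ?; clear; lia.
have : [set y in D | e a y] :\: Fb != set0.
  rewrite -card_gt0 cardsD.
  have := subset_leq_card (subsetIr [set y in D | e a y] Fb).
  move: N3 Fb2; move: #|_ :&: _| #|Fb| #|[set y in D | e a y]| => ? ? ?; clear; lia.
case/set0Pn => y; rewrite !inE negb_or => /and3P[/andP[yS yA0] yD eay].
have yS' : y \notin S by apply: contra yS => ->; rewrite yD.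
exists (fun x => if x == a then y else g0 x); split.
- by move=> x xA /=; case: eqP => [_|/eqP xa] //; apply: g1; apply/setD1P.
- by move=> x xA /=; case: eqP => [->|/eqP xa] //; apply: g2; apply/setD1P.
- by move=> x xA /=; case: eqP => [_|/eqP xa] //; apply: g3; apply/setD1P.
move=> x z xA zA /=; case: eqP => [->|/eqP xa]; case: eqP => [->|/eqP za] //.
- by move=> yz; move: yA0; rewrite yz (imset_f g0) //; apply/setD1P.
- by move=> yz; move: yA0; rewrite -yz (imset_f g0) //; apply/setD1P.
- by apply: g4; apply/setD1P.
Qed.


Lemma extend (T : finType) (e : rel T) (D : {set T}) k :
  simple_graph e -> three_dominating e D -> has_3proper D e k ->
  has_3proper [set: T] e k.+1.
Proof.
move=> [es ei] td /existsP[c /andP[/forallP csym /forallP cS]].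
pose c' := [ffun p : T * T => if (p.1 \in D) && (p.2 \in D)
              then widen_ord (leqnSn k) (c p) else ord_max].
apply/existsP; exists c'; apply/andP; split.
  apply/forallP => x; apply/forallP => y; rewrite !ffunE /= andbC.
  by case: ifP => _ //; rewrite (eqP (forallP (csym x) y)).
apply/forallP => S; apply/implyP => /andP[_ /eqP S3].
have [f [f1 f2 f3 f4]] := sdr td (eq_leq S3).
pose S' := f @: S.
have S'D : S' \subset D by apply/subsetP => _ /imsetP[x xS ->]; apply: f1.
have cS' : #|S'| = 3 by rewrite card_in_imset.
have := cS S'; rewrite S'D cS' eqxx /= => /existsP[W' /existsP[F' /and3P[tr sub pr]]].
have W'3 : 3 <= #|W'| by rewrite -cS'; apply: subset_leq_card.
have W'D : W' \subset D by apply: tree_sub tr _; lia.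
case/treeP: tr => h1 h2 h3 h4 [h5 h6].
pose X := S :\: D.
pose N1 := [set (x, f x) | x in X].
pose N2 := [set (f x, x) | x in X].
pose W := W' :|: X.
pose F := F' :|: (N1 :|: N2).
have fW' : forall x, x \in S -> f x \in W'.
  by move=> x xS; apply: (subsetP sub); apply: imset_f.
have inF : forall p, p \in F -> [\/ p \in F', (exists2 w, w \in X & p = (w, f w)) |
                                    exists2 w, w \in X & p = (f w, w)].
  move=> p; rewrite !inE => /or3P[pF|/imsetP[w wX ->]|/imsetP[w wX ->]].
  - by constructor 1.
  - by constructor 2; exists w.
  - by constructor 3; exists w.
have F'D : forall p, p \in F' -> (p.1 \in D) && (p.2 \in D).
  by move=> p /h1 /and3P[-> ->].
have XD : forall x, x \in X -> (x \notin D) && (x \in S).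
  by move=> x; rewrite inE.
have N1F : forall w, w \in X -> (w, f w) \in F.
  by move=> w wX; rewrite !inE (imset_f (fun x => (x, f x))) ?orbT.
have N2F : forall w, w \in X -> (f w, w) \in F.
  by move=> w wX; rewrite !inE (imset_f (fun x => (f x, x))) ?orbT.
have F'F : F' \subset F by apply/subsetP => p pF; rewrite !inE pF.
apply/existsP; exists W; apply/existsP; exists F; apply/and3P; split.
- apply/treeP; split.
  + move=> p /inF [pF|[w wX ->]|[w wX ->]].
    * by have /and3P[_ _ ?] := h1 _ pF; rewrite /induced !inE.
    * by have /andP[wD wS] := XD _ wX; rewrite /induced !inE f2.
    * by have /andP[wD wS] := XD _ wX; rewrite /induced !inE es f2.
  + move=> p /inF [pF|[w wX ->]|[w wX ->]].
    * by apply: (subsetP F'F); apply: h2.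
    * exact: N2F.
    * exact: N1F.
  + move=> p /inF [pF|[w wX ->]|[w wX ->]]; apply/setUP.
    * by left; rewrite h3.
    * by right.
    * by have /andP[wD wS] := XD _ wX; left; rewrite fW'.
  + by apply/set0Pn; have /set0Pn[w ?] := h4; exists w; rewrite inE; apply/orP; left.
  have /set0Pn[s0 s0W] := h4.
  have hub : forall x, x \in W -> connect (fun a b => (a, b) \in F) x s0 /\
                                  connect (fun a b => (a, b) \in F) s0 x.
    move=> x; rewrite inE => /orP[xW|xX].
      by split; apply: connect_mono F'F _; apply: h5.
    have /andP[xD xS] := XD _ xX.
    split.
      apply: connect_trans (connect1 (N1F _ xX)) _.
      by apply: connect_mono F'F _; apply: h5 => //; apply: fW'.
    apply: connect_trans _ (connect1 (N2F _ xX)).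
    by apply: connect_mono F'F _; apply: h5 => //; apply: fW'.
  split.
    by move=> x y xW yW; apply: connect_trans (proj1 (hub x xW)) (proj2 (hub y yW)).
  have cW : #|W| = #|W'| + #|X|.
    apply: cardsU_disj => x xW'; rewrite inE negb_and negbK.
    by rewrite (subsetP W'D).
  have cN1 : #|N1| = #|X| by apply: card_imset => x y [].
  have cN2 : #|N2| = #|X| by apply: card_imset => x y [].
  have cN : #|N1 :|: N2| = #|X| + #|X|.
    rewrite -{1}cN1 -cN2; apply: cardsU_disj => _ /imsetP[w wX ->].
    apply/imsetP => -[w' w'X [e1 _]].
    have /andP[wD wS] := XD _ wX; have /andP[w'D w'S] := XD _ w'X.
    by move: wD; rewrite e1 f1.
  have cF : #|F| = #|F'| + #|N1 :|: N2|.
    apply: cardsU_disj => p pF; have /andP[p1 p2] := F'D _ pF.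
    rewrite inE negb_or; apply/andP; split; apply/imsetP => -[w wX pe];
      have /andP[wD wS] := XD _ wX; move: p1 p2; rewrite pe /=.
      by rewrite (negbTE wD).
    by rewrite (negbTE wD).
  rewrite cF cN cW h6.
  have := card_gt0 W'; rewrite h4; move: #|W'| #|X| => a b; clear; move=> ?; lia.
- apply/subsetP => x xS; rewrite inE; case: (boolP (x \in D)) => xD.
    by rewrite -(f3 x xS xD) fW'.
  by rewrite inE xD xS orbT.
apply/forallP => x; apply/forallP => y; apply/forallP => z.
apply/implyP => /and3P[xy xz yz].
have newF : forall a b, (a, b) \in F -> (a, b) \notin F' -> ~~ ((a \in D) && (b \in D)).
  move=> a b /inF [->//|[w wX [-> ->]]|[w wX [-> ->]]] _;
    have /andP[wD wS] := XD _ wX; by rewrite (negbTE wD) ?andbF.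
have val_c' : forall a b, (a, b) \in F' -> nat_of_ord (c' (a, b)) = c (a, b).
  by move=> a b abF; rewrite ffunE /=; have := F'D _ abF; rewrite /= => ->.
case: (boolP ((x, y) \in F')) => xyF'; case: (boolP ((x, z) \in F')) => xzF'.
- rewrite -val_eqE /= !val_c' // val_eqE.
  by have := forallP (forallP (forallP pr x) y) z; rewrite xyF' xzF' yz.
- rewrite -val_eqE /= (val_c' x y) // ffunE /= (negbTE (newF _ _ xz xzF')) /=.
  by rewrite neq_ltn ltn_ord.
- rewrite -val_eqE /= (val_c' x z) // ffunE /= (negbTE (newF _ _ xy xyF')) /=.
  by rewrite neq_ltn ltn_ord orbT.
exfalso.
move: xy xz xyF' xzF' yz.
move=> /inF [->//|[w wX [-> ->]]|[w wX [-> ->]]];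
  move=> /inF [->//|[w' wX' [e1 ->]]|[w' wX' [e1 ->]]] _ _ yz;
  have /andP[wD wS] := XD _ wX; have /andP[w'D w'S] := XD _ wX'.
- by move: yz; rewrite e1 eqxx.
- by move: wD; rewrite e1 f1.
- by move: w'D; rewrite -e1 f1.
- by move: yz; rewrite (f4 _ _ wS w'S e1) eqxx.
Qed.


Lemma px3_spec (T : finType) (V : {set T}) (r : rel T) :
  (exists k, has_3proper V r k) ->
  has_3proper V r (px3 V r) /\ forall k, has_3proper V r k -> px3 V r <= k.
Proof.
move=> ex; rewrite /px3; case: excluded_middle_informative => [h|//].
by case: ex_minnP => m Pm mmin; split.
Qed.

Lemma widen_has (T : finType) (V : {set T}) (r : rel T) k k' :
  k <= k' -> has_3proper V r k -> has_3proper V r k'.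
Proof.
move=> kk /existsP[c /andP[/forallP csym /forallP cS]].
apply/existsP; exists [ffun p => widen_ord kk (c p)]; apply/andP; split.
  apply/forallP => x; apply/forallP => y; rewrite !ffunE.
  by rewrite (eqP (forallP (csym x) y)).
apply/forallP => S; apply/implyP => /(implyP (cS S)) /existsP[W /existsP[F /and3P[tr SW pr]]].
apply/existsP; exists W; apply/existsP; exists F; rewrite tr SW /=.
apply/forallP => x; apply/forallP => y; apply/forallP => z; apply/implyP => h.
have := implyP (forallP (forallP (forallP pr x) y) z) h.
by rewrite !ffunE -!val_eqE /=.
Qed.

Lemma part1 (T : finType) (e : rel T) (D : {set T}) :
  simple_graph e -> connectedb [set: T] e -> min_degree_ge e 3 ->
  three_dominating e D -> connectedb D e -> px3 [set: T] e <= px3 D e + 1.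
Proof.
move=> sg _ _ td cD.
have [hD _] := px3_spec (exists_coloring sg cD).
have hG := extend sg td hD.
have [_ mG] := px3_spec (ex_intro (fun k => has_3proper _ _ k) _ hG).
by rewrite addn1; apply: mG.
Qed.


Definition ET : finType := ('I_3 + 'I_17)%type.
Definition ee : rel ET := fun x y =>
  match x, y with inl i, inl j => i != j | inr _, inr _ => false | _, _ => true end.
Definition ED : {set ET} := [set x : ET | if x is inl _ then true else false].
Definition o0 : 'I_3 := @Ordinal 3 0 isT.
Definition o1 : 'I_3 := @Ordinal 3 1 isT.
Definition o2 : 'I_3 := @Ordinal 3 2 isT.

Lemma I3cases (i : 'I_3) : [\/ i = o0, i = o1 | i = o2].
Proof.
case: i => [[|[|[|m]]] h].
- by constructor 1; apply: val_inj.
- by constructor 2; apply: val_inj.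
- by constructor 3; apply: val_inj.
- by [].
Qed.

Lemma ee_sg : simple_graph ee.
Proof.
split; first by move=> [i|i] [j|j] //=; rewrite eq_sym.
by move=> [i|i] //=; rewrite eqxx.
Qed.

Lemma card_ED : #|ED| = 3.
Proof.
have -> : ED = inl @: [set: 'I_3].
  apply/setP => -[i|j]; rewrite !inE.
    by rewrite (imset_f inl).
  by apply/esym/imsetP => -[].
by rewrite card_imset ?cardsT ?card_ord // => x y [].
Qed.

Lemma card3_sub (U : finType) (f : 'I_3 -> U) (A : {set U}) :
  injective f -> (forall i, f i \in A) -> 3 <= #|A|.
Proof.
move=> fi fA; have <- : #|f @: [set: 'I_3]| = 3 by rewrite card_imset // cardsT card_ord.
by apply: subset_leq_card; apply/subsetP => _ /imsetP[i _ ->].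
Qed.

Lemma ee_conn : connectedb [set: ET] ee.
Proof.
have sym : symmetric (induced [set: ET] ee).
  by move=> x y; rewrite /induced !inE /=; case: ee_sg => s _; rewrite s.
have hub : forall x, connect (induced [set: ET] ee) x (inl o0).
  move=> [i|j].
    case: (i =P o0) => [->|/eqP io]; first exact: connect0.
    by apply: connect1; rewrite /induced !inE.
  by apply: connect1; rewrite /induced !inE.
apply/forall_inP => x _; apply/forall_inP => y _.
by apply: connect_trans (hub x) _; rewrite (sym_connect_sym sym).
Qed.

Lemma eD_conn : connectedb ED ee.
Proof.
apply/forall_inP => -[i|i]; rewrite inE // => _.
apply/forall_inP => -[j|j]; rewrite inE // => _.
case: (i =P j) => [->|/eqP ij]; first exact: connect0.
by apply: connect1; rewrite /induced !inE.
Qed.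

Lemma ee_deg : min_degree_ge ee 3.
Proof.
move=> [i|j].
  apply: (@card3_sub _ (fun j => inr (widen_ord (isT : 3 <= 17) j))).
    move=> a b h; apply: val_inj; move: h => /(f_equal (fun x : ET => if x is inr y then nat_of_ord y else 0)) /=. done.
  by move=> a; rewrite inE.
apply: (@card3_sub _ inl); first by move=> a b [].
by move=> a; rewrite inE.
Qed.

Lemma ee_dom : three_dominating ee ED.
Proof.
move=> [i|j]; rewrite inE // => _.
apply: (@card3_sub _ inl); first by move=> a b [].
by move=> a; rewrite !inE.
Qed.


Definition A01 : {set ET} := inl o0 |: [set inl o1].
Definition c2 : {ffun ET * ET -> 'I_2} :=
  [ffun p : ET * ET => if (p.1 \in A01) && (p.2 \in A01) then ord0 else ord_max].
Definition F2 : {set ET * ET} :=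
  (inl o0, inl o1) |: ((inl o1, inl o0) |: ((inl o1, inl o2) |: [set (inl o2, inl o1)])).

Lemma F2P x y : (x, y) \in F2 ->
  [\/ x = inl o0 /\ y = inl o1, x = inl o1 /\ y = inl o0,
      x = inl o1 /\ y = inl o2 | x = inl o2 /\ y = inl o1].
Proof.
rewrite !inE => /or4P[] /eqP[-> ->].
- by constructor 1.
- by constructor 2.
- by constructor 3.
- by constructor 4.
Qed.

Lemma hasD2 : has_3proper ED ee 2.
Proof.
apply/existsP; exists c2; apply/andP; split.
  by apply/forallP => x; apply/forallP => y; rewrite !ffunE /= andbC.
apply/forallP => S; apply/implyP => /andP[SD _].
apply/existsP; exists ED; apply/existsP; exists F2; rewrite SD /=.
apply/andP; split.
  apply/treeP; split.
  - by move=> [x y] /F2P [][-> ->]; rewrite /induced !inE.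
  - by move=> [x y] /F2P [][-> ->]; rewrite !inE eqxx ?orbT.
  - by move=> [x y] /F2P [][-> ->]; rewrite !inE.
  - by apply/set0Pn; exists (inl o0); rewrite inE.
  split; last first.
    by rewrite card_ED /F2 !cardsU1 cards1 !inE.
  have hub : forall x, x \in ED -> connect (fun a b => (a, b) \in F2) x (inl o1) /\
                                   connect (fun a b => (a, b) \in F2) (inl o1) x.
    move=> [i|j]; rewrite inE // => _.
    by case: (I3cases i) => ->; split; rewrite ?connect0 //; apply: connect1; rewrite !inE.
  by move=> x y xD yD; apply: connect_trans (proj1 (hub x xD)) (proj2 (hub y yD)).
apply/forallP => x; apply/forallP => y; apply/forallP => z.
apply/implyP => /and3P[/F2P h1 /F2P h2 yz].
by case: h1 h2 yz => [][-> ->] [][e ->] //; rewrite ?ffunE !inE.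
Qed.


Lemma three_in (U : finType) (P : {set U}) : 2 < #|P| ->
  exists a1 a2 a3, [/\ a1 \in P, a2 \in P, a3 \in P, a1 != a2 & (a1 != a3) && (a2 != a3)].
Proof.
move=> P3.
have : 0 < #|P| by lia.
rewrite card_gt0 => /set0Pn[a1 a1P].
have : 0 < #|P :\ a1| by move: P3; rewrite (cardsD1 a1) a1P; lia.
rewrite card_gt0 => /set0Pn[a2 /setD1P[a21 a2P]].
have : 0 < #|P :\ a1 :\ a2|.
  by move: P3; rewrite (cardsD1 a1 P) a1P (cardsD1 a2 (P :\ a1)) !inE a21 a2P /=; lia.
rewrite card_gt0 => /set0Pn[a3 /setD1P[a32 /setD1P[a31 a3P]]].
exists a1, a2, a3; split => //.
  by apply/eqP => e; move: a21; rewrite e eqxx.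
by apply/andP; split; apply/eqP => e; [move: a31|move: a32]; rewrite e eqxx.
Qed.

Lemma pigeon3 (A B : finType) (f : A -> B) : 2 * #|B| < #|A| ->
  exists a1 a2 a3, [/\ a1 != a2, (a1 != a3) && (a2 != a3), f a1 = f a2 & f a1 = f a3].
Proof.
move=> hAB.
case: (boolP [exists b, 2 < #|[set a | f a == b]|]).
  case/existsP => b /three_in [a1 [a2 [a3 [h1 h2 h3 h12 h123]]]].
  move: h1 h2 h3; rewrite !inE => /eqP e1 /eqP e2 /eqP e3.
  by exists a1, a2, a3; split => //; rewrite ?e1 ?e2 ?e3.
rewrite negb_exists => /forallP hb.
have : #|A| = \sum_(b : B) #|[set a | f a == b]|.
  rewrite -sum1_card (partition_big f predT) //=; apply: eq_bigr => b _.
  by rewrite -sum1_card; apply: eq_bigl => a; rewrite inE.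
have : \sum_(b : B) #|[set a | f a == b]| <= \sum_(b : B) 2.
  by apply: leq_sum => b _; have := hb b; rewrite -leqNgt.
rewrite sum_nat_const => h1 h2; move: hAB h1; rewrite h2.
have -> : #|(xpredT : pred B)| = #|B| by apply: eq_card.
move: (\sum_(b : B) _) => s; clear; lia.
Qed.


Lemma no2 : ~~ has_3proper [set: ET] ee 2.
Proof.
apply/negP => /existsP[c /andP[_ /forallP cS]].
pose tf := fun j : 'I_17 => [ffun i : 'I_3 => c (inl i, inr j)].
have [j1 [j2 [j3 [d12 /andP[d13 d23] t12 t13]]]] : exists a1 a2 a3,
    [/\ a1 != a2, (a1 != a3) && (a2 != a3), tf a1 = tf a2 & tf a1 = tf a3].
  by apply: pigeon3; rewrite card_ffun !card_ord.
pose S : {set ET} := inr j1 |: (inr j2 |: [set inr j3]).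
have S3 : #|S| = 3.
  rewrite !cardsU1 cards1 !inE /=.
  have E : forall a b : 'I_17, (inr a == inr b :> ET) = (a == b) by [].
  by rewrite !E (negbTE d12) (negbTE d13) (negbTE d23).
have memS : forall s, s \in S -> exists2 j, s = inr j & tf j = tf j1.
  move=> s; rewrite !inE => /or3P[] /eqP ->.
  - by exists j1.
  - by exists j2.
  - by exists j3.
have same : forall i s s', s \in S -> s' \in S -> c (inl i, s) = c (inl i, s').
  move=> i s s' /memS[j -> tj] /memS[j' -> tj'].
  have : tf j i = tf j' i by rewrite tj tj'.
  by rewrite !ffunE.
have := cS S; rewrite subsetT S3 /= => /existsP[W /existsP[F /and3P[tr SW pr]]].
case/treeP: tr => h1 h2 h3 h4 [h5 h6].
have prop : forall x y z, (x, y) \in F -> (x, z) \in F -> y != z -> c (x, y) != c (x, z).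
  move=> x y z xy xz yz.
  by have := forallP (forallP (forallP pr x) y) z; rewrite xy xz yz.
have W3 : 3 <= #|W| by rewrite -S3; apply: subset_leq_card.
pose B := [set p : ET * ET | p.1 \in S].
have cF := cardsID B F.
have hFS : #|F :&: B| <= 3.
  rewrite -card_ED -(card_in_imset (f := snd)).
    apply: subset_leq_card; apply/subsetP => z /imsetP[[x y] /setIP[xyF]].
    rewrite inE /= => /memS[j xj _] -> /=.
    have := h1 _ xyF; rewrite /induced /= xj; case: y {xyF} => [i _|i /and3P[]] //.
    by rewrite inE.
  move=> [x y] [x' y'] /setIP[xyF xS] /setIP[xyF' xS'] /= yy.
  rewrite inE /= in xS; rewrite inE /= in xS'.
  subst y'.
  case: (eqVneq x x') => [-> //|xx].
  have := h1 _ xyF; have [j xj _] := memS _ xS; rewrite xj /induced /=.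
  case: y xyF xyF' => [i xyF xyF' _|i _ _ /and3P[]] //.
  have := prop _ _ _ (h2 _ xyF) (h2 _ xyF') xx; rewrite /= (same i x x') //.
  by rewrite eqxx.
have hFr : #|F :\: B| <= (#|W| - 3) * 2.
  rewrite -(card_in_imset (f := fun p => (p.1, c p))).
    have -> : (#|W| - 3) * 2 = #|setX (W :\: S) [set: 'I_2]|.
      by rewrite cardsX cardsT card_ord cardsDS // S3.
    apply: subset_leq_card; apply/subsetP => z /imsetP[[u v] /setDP[uvF uS] ->].
    rewrite inE /= in uS; rewrite in_setX in_setT andbT; apply/setDP; split => //; exact: (h3 _ uvF).
  move=> [a1 b1] [a2 b2] /setDP[abF _] /setDP[abF' _] /= [ex ec].
  subst a2.
  case: (eqVneq b1 b2) => [-> //|bb].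
  by have := prop _ _ _ abF abF' bb; rewrite ec eqxx.
move: cF hFS hFr W3; rewrite h6; move: #|W| #|F :&: B| #|F :\: B| => a b d; clear; lia.
Qed.

Theorem theorem3p4 :
  (forall (T : finType) (e : rel T) (D : {set T}),
      simple_graph e ->
      connectedb [set: T] e ->
      min_degree_ge e 3 ->
      three_dominating e D ->
      connectedb D e ->
      px3 [set: T] e <= px3 D e + 1) /\
  (exists (T : finType) (e : rel T) (D : {set T}),
      simple_graph e /\ connectedb [set: T] e /\ min_degree_ge e 3 /\
      three_dominating e D /\ connectedb D e /\
      px3 [set: T] e = px3 D e + 1).
Proof.
split; first exact: part1.
exists ET, ee, ED; split; first exact: ee_sg.
split; first exact: ee_conn.
split; first exact: ee_deg.
split; first exact: ee_dom.
split; first exact: eD_conn.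
have [hDp mD] := px3_spec (ex_intro (fun k => has_3proper _ _ k) _ hasD2).
have hG := extend ee_sg ee_dom hDp.
have [hGp mG] := px3_spec (ex_intro (fun k => has_3proper _ _ k) _ hG).
have D2 := mD _ hasD2.
have G1 := mG _ hG.
have G3 : 3 <= px3 [set: ET] ee.
  move: hGp; case: (px3 _ _) => [|[|[|m]]] // h.
  - by case/existsP: h => c _; case: (c (inl o0, inl o0)).
  - by move: (widen_has (isT : 1 <= 2) h); rewrite (negbTE no2).
  - by rewrite (negbTE no2) in h.
move: D2 G1 G3; move: (px3 [set: ET] ee) (px3 ED ee) => a b; clear; lia.
Qed.
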